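(* Let $h=\prod_{i=1}^{t}p_i^{s_i}$ with distinct primes $p_i$ and $s_i\ge1$, $m\le n$, and let $A=SDT\in\mathbb{Z}_h^{m\times n}$ where $S\in GL_m(\mathbb{Z}_h)$, $T\in GL_n(\mathbb{Z}_h)$ and $D=\mathrm{diag}(\prod_{i=1}^tp_i^{\alpha_{i1}},\ldots,\prod_{i=1}^tp_i^{\alpha_{im}})$ with $0\leq\alpha_{i1}\leq\cdots\leq\alpha_{im}\leq s_i$ for all $i$. Then the inner rank of $A$ equals $\max\{c\in\{1,\dots,m\}: (\alpha_{1c},\alpha_{2c},\ldots,\alpha_{tc})\neq(s_1,s_2,\ldots,s_t)\}$ (interpreted as $0$ if this set is empty).
   Context: For a commutative ring $R$ and nonzero $A\in R^{m\times n}$, the inner rank $\rho(A)$ is the least integer $r$ such that $A=BC$ with $B\in R^{m\times r}$, $C\in R^{r\times n}$; $\rho(0)=0$. $\mathrm{diag}(d_1,\ldots,d_m)$ for $m\le n$ denotes the $m\times n$ matrix with $d_1,\dots,d_m$ on the main diagonal and zeros elsewhere. *)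

(* Defs.v *)
From HB Require Import structures.
From mathcomp Require Import all_boot all_order all_algebra.
Set Implicit Arguments. Unset Strict Implicit. Unset Printing Implicit Defensive.
Import GRing.Theory.
Local Open Scope ring_scope.

Definition factors_through (R : comRingType) (m n : nat) (A : 'M[R]_(m, n)) (r : nat) : Prop :=
  exists (B : 'M[R]_(m, r)) (C : 'M[R]_(r, n)), A = B *m C.

Definition is_inner_rank (R : comRingType) (m n : nat) (A : 'M[R]_(m, n)) (r : nat) : Prop :=
  factors_through A r /\ forall r', factors_through A r' -> (r <= r')%N.

Definition rect_diag (R : ringType) (m n : nat) (d : 'I_m -> R) : 'M[R]_(m, n) :=
  \matrix_(i < m, j < n) (if (i == j :> nat) then d i else 0).

(* Main.v *)
Require Import Defs.
From HB Require Import structures.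
From mathcomp Require Import all_boot all_order all_algebra.
From mathcomp Require Import ring.
Import GRing.Theory.
Local Open Scope ring_scope.
Lemma intr_Zh0 (h : nat) (z : int) : (1 < h)%N -> (z%:~R : 'Z_h) = 0 -> (Posz h %| z)%Z.
Proof.
move=> h1.
have hh : (Zp_trunc h).+2 = h by rewrite /Zp_trunc; case: h h1 => [|[|h]].
have natE : forall n : nat, (n%:R : 'Z_h) = 0 -> (h %| n)%N.
  move=> n /(congr1 val); rewrite Zp_nat /= hh => H.
  by rewrite /dvdn H.
case: z => n.
  by move=> /natE; rewrite dvdzE.
rewrite NegzE intrN => /eqP; rewrite oppr_eq0 => /eqP /natE.
by rewrite dvdzE.
Qed.

Lemma key (h g p r r' : nat) : (1 < h)%N -> prime p -> (0 < g)%N -> h = (g * p)%N ->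
  (r' < r)%N -> forall (B : 'M['Z_h]_(r, r')) (C : 'M['Z_h]_(r', r)),
  B *m C <> (g%:R)%:M.
Proof.
move=> h1 pp g0 hgp rr B C BC.
pose zl := fun x : 'Z_h => Posz (nat_of_ord x).
have zlK : forall x, ((zl x)%:~R : 'Z_h) = x.
  move=> x; rewrite /zl /=.
  have hh : (Zp_trunc h).+2 = h by rewrite /Zp_trunc; case: h h1 {hgp B C BC x zl} => [|[|h]].
  by rewrite -[RHS](@natr_Zp (Zp_trunc h)).
pose M := map_mx zl B *m map_mx zl C.
have Mdef : M = map_mx zl B *m map_mx zl C by [].
clearbody M.
have hM : map_mx (intr : {rmorphism int -> 'Z_h}) M = (g%:R)%:M.
  rewrite Mdef map_mxM -BC; congr (_ *m _); apply/matrixP => i j; rewrite !mxE; apply: zlK.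
have dv : forall i j, (Posz h %| M i j - (i == j)%:Z * g%:Z)%Z.
  move=> i j; apply: intr_Zh0 => //.
  have Hij : (M i j)%:~R = (g%:R : 'Z_h) *+ (i == j).
    by move/matrixP: hM => /(_ i j); rewrite mxE [in RHS]mxE.
  rewrite rmorphB /= Hij /= rmorphM /= pmulrn.
  by case: (i == j); rewrite /= ?mul1r ?mul0r subrr.
pose E := \matrix_(i, j) ((M i j - (i == j)%:Z * g%:Z) %/ Posz h)%Z.
have hME : M = g%:Z *: (1%:M + p%:Z *: E).
  apply/matrixP => i j; rewrite !mxE.
  have := divzK (dv i j); have hz : Posz h = Posz g * Posz p by rewrite hgp PoszM.
  rewrite hz.
  set q := (_ %/ _)%Z => Hq.
  have -> : M i j = (i == j)%:Z * g%:Z + q * (g%:Z * p%:Z) by rewrite Hq addrC subrK.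
  by case: (i == j); rewrite /= mulrDr; ring.
have d0 : \det M = 0.
  apply/eqP; rewrite -(intr_eq0 rat) -(det_map_mx (intr : {rmorphism int -> rat})).
  apply/negPn/negP => Hu.
  have : \rank (map_mx (intr : {rmorphism int -> rat}) M) = r.
    by apply: mxrank_unit; rewrite unitmxE unitfE.
  rewrite Mdef map_mxM => Hr.
  have := leq_trans (mxrankM_maxr (map_mx (intr : {rmorphism int -> rat}) (map_mx zl B)) (map_mx (intr : {rmorphism int -> rat}) (map_mx zl C))) (rank_leq_row (map_mx (intr : {rmorphism int -> rat}) (map_mx zl C))).
  by rewrite Hr leqNgt rr.
move: d0; rewrite hME detZ => /eqP; rewrite mulf_eq0 expf_eq0 => /orP [/andP [_]|].
  move=> /eqP H; have gE : g = 0%N by case: H.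
  by rewrite gE in g0.

move=> /eqP dN.
have := det_map_mx (intr : {rmorphism int -> 'F_p}) (1%:M + p%:Z *: E).
rewrite dN rmorph0.
have -> : map_mx (intr : {rmorphism int -> 'F_p}) (1%:M + p%:Z *: E) = 1%:M.
  apply/matrixP => i j; rewrite !mxE rmorphD rmorphM /=.
  have Fp0 : ((Posz p)%:~R : 'F_p) = 0 by exact: (pchar_Fp_0 pp).
  rewrite Fp0 mul0r addr0 rmorph_nat.
  by case: (i == j); rewrite /= ?rmorph1 ?rmorph0.
by rewrite det1 => /eqP; rewrite oner_eq0.
Qed.

Theorem lemma2p11 (t : nat) (p s : 'I_t -> nat)
  (ht : (0 < t)%N)
  (hp : forall i, prime (p i)) (hpinj : injective p)
  (hs : forall i, (0 < s i)%N)
  (m n : nat) (hmn : (m <= n)%N)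
  (alpha : 'I_t -> 'I_m -> nat)
  (halpha_mono : forall i (c1 c2 : 'I_m), (c1 <= c2)%N -> (alpha i c1 <= alpha i c2)%N)
  (halpha_le : forall i c, (alpha i c <= s i)%N)
  (S : 'M['Z_(\prod_(i < t) p i ^ s i)]_m)
  (T : 'M['Z_(\prod_(i < t) p i ^ s i)]_n)
  (hS : S \in unitmx) (hT : T \in unitmx) :
  is_inner_rank
    (S *m rect_diag n (fun c : 'I_m => ((\prod_(i < t) p i ^ alpha i c)%N)%:R) *m T)
    (\max_(c < m | [exists i, alpha i c != s i]) c.+1)%N.
Proof.
set h := (\prod_(i < t) p i ^ s i)%N.
set r := (\max_(c < m | _) c.+1)%N.
set d := fun c : 'I_m => (\prod_(i < t) p i ^ alpha i c)%N.
set D := rect_diag n _.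
have h1 : (1 < h)%N.
  rewrite /h (bigD1 (Ordinal ht)) //=.
  have H : (1 < p (Ordinal ht) ^ s (Ordinal ht))%N.
    by rewrite -(exp1n (s (Ordinal ht))) ltn_exp2r ?hs // prime_gt1.
  apply: (leq_trans H); apply: leq_pmulr; apply: prodn_gt0 => i.
  by rewrite expn_gt0 prime_gt0.
have hd0 : forall c : 'I_m, (r <= c)%N -> ((d c)%:R : 'Z_h) = 0.
  move=> c rc.
  have allE : forall i, alpha i c = s i.
    move=> i; apply/eqP; apply/negPn/negP => Hne.
    have := @leq_bigmax_cond _ (fun c : 'I_m => [exists i, alpha i c != s i]) (fun c : 'I_m => c.+1) c.
    move=> /(_ (introT existsP (ex_intro _ i Hne))); rewrite -/r.
    by rewrite ltnNge rc.
  have -> : d c = h by rewrite /d /h; apply: eq_bigr => i _; rewrite allE.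
  exact: pchar_Zp h1.
split.
  pose D1 : 'M['Z_h]_(m, r) := \matrix_(i, k) (if (i == k :> nat) then ((d i)%:R : 'Z_h) else 0).
  pose D2 : 'M['Z_h]_(r, n) := \matrix_(k, j) (if (k == j :> nat) then (1 : 'Z_h) else 0).
  have DE : D = D1 *m D2.
    apply/matrixP => i j; rewrite /D /rect_diag !mxE.
    case: (ltnP i r) => ir.
      rewrite [in RHS](bigD1 (Ordinal ir)) //= [in RHS]big1 ?addr0; last first.
        move=> k; rewrite ?andTb => /negbTE kne; rewrite !mxE; case: eqP => ik; last by rewrite mul0r.
        have : k == Ordinal ir by apply/eqP/val_inj; rewrite /= -ik.
        by rewrite kne.
      rewrite !mxE eqxx /=; case: (i == j :> nat); by rewrite ?mulr1 ?mulr0.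
    rewrite [in RHS]big1; last first.
      move=> k _; rewrite !mxE (gtn_eqF (leq_trans (ltn_ord k) ir)).
      by rewrite mul0r.
    by case: eqP => // _; exact: hd0.
  by exists (S *m D1), (D2 *m T); rewrite DE !mulmxA.
move=> r' [B [C hA]].
rewrite leqNgt; apply/negP => rr.
have r0 : (0 < r)%N by exact: leq_ltn_trans (leq0n r') rr.
case: (pickP (fun c : 'I_m => [exists i, alpha i c != s i] && (r <= c.+1)%N)) => [c0 /andP [Pc0 rc0] | none]; last first.
  have : (r <= r.-1)%N.
    rewrite /r; apply/bigmax_leqP => c Pc.
    have := none c; rewrite /= Pc /= => /negbT; rewrite -ltnNge -/r => H.
    by rewrite -ltnS prednK.
  by rewrite leqNgt ltn_predL r0.
have rE : r = c0.+1.
  apply/eqP; rewrite eqn_leq rc0 /=.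
  exact: (@leq_bigmax_cond _ (fun c : 'I_m => [exists i, alpha i c != s i]) (fun c : 'I_m => c.+1) c0 Pc0).
case/existsP: Pc0 => i0 hi0.
have ai0 : (alpha i0 c0 < s i0)%N by rewrite ltn_neqAle hi0 halpha_le.
pose s' i := if i == i0 then (s i).-1 else s i.
pose g := (\prod_(i < t) p i ^ s' i)%N.
pose e c := (\prod_(i < t) p i ^ (s' i - alpha i c))%N.
have hle : forall c : 'I_m, (c < r)%N -> forall i, (alpha i c <= s' i)%N.
  move=> c cr i; rewrite /s'; case: eqP => [->|_]; last exact: halpha_le.
  rewrite -ltnS prednK ?hs //. apply: leq_ltn_trans (halpha_mono i0 c c0 _) ai0.
  by rewrite -ltnS -rE.
have hde : forall c : 'I_m, (c < r)%N -> (d c * e c)%N = g.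
  move=> c cr; rewrite /d /e /g -big_split /=; apply: eq_bigr => i _.
  by rewrite -expnD subnKC // hle.
have hg : h = (g * p i0)%N.
  rewrite /h /g (bigD1 i0) //= [in RHS](bigD1 i0) //= /s' eqxx.
  rewrite [in RHS](eq_bigr (fun i => p i ^ s i)%N); last by move=> i /negbTE ->.
  rewrite -[in LHS](prednK (hs i0)) expnS.
  ring.
have hg0 : (0 < g)%N by rewrite /g prodn_gt0 // => i; rewrite expn_gt0 prime_gt0.
have hrm : (r <= m)%N by rewrite rE.
have hrn : (r <= n)%N := leq_trans hrm hmn.
have hD : D = (invmx S *m B) *m (C *m invmx T).
  have H : invmx S *m (S *m D *m T) *m invmx T = D.
    by rewrite -mulmxA mulmxK // mulKmx.
  by rewrite -{1}H hA !mulmxA.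
pose X := invmx S *m B; pose Y := C *m invmx T.
have hD' : D = X *m Y by [].
clearbody X Y.
pose B' : 'M['Z_h]_(r, r') := \matrix_(i, k) X (widen_ord hrm i) k.
pose C' : 'M['Z_h]_(r', r) := \matrix_(k, j) (Y k (widen_ord hrn j) * ((e (widen_ord hrm j))%:R : 'Z_h)).
apply: (@key h g (p i0) r r' h1 (hp i0) hg0 hg rr B' C').
apply/matrixP => i j; rewrite !mxE.
under eq_bigr do rewrite !mxE mulrA.
rewrite -mulr_suml.
have E1 : \sum_k X (widen_ord hrm i) k * Y k (widen_ord hrn j) = D (widen_ord hrm i) (widen_ord hrn j).
  by rewrite hD' mxE.
rewrite E1 /D /rect_diag mxE /=.
case: (eqVneq i j) => [<-|ne].
  rewrite eqxx /= -natrM.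
  by have := hde (widen_ord hrm i) (ltn_ord i); rewrite /d => ->.
have -> : (i == j :> nat) = false by exact: negbTE ne.
by rewrite mul0r.
Qed.
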